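(* Fix $0<r_1,r_2\le 1$ and $n\ge 1$. Consider a cycle $A\to B^1\to B^2\to\cdots\to B^n\to A$ of $n+1$ distinct pools with positive reserves: pool $1$ is $A\rightleftharpoons B^1$ with reserves $a_1$ of $A$ and $b^1_1$ of $B^1$; for $2\le k\le n$, pool $k$ is $B^{k-1}\rightleftharpoons B^k$ with reserves $b^{k-1}_k$ of $B^{k-1}$ and $b^k_k$ of $B^k$; pool $n+1$ is $B^n\rightleftharpoons A$ with reserves $b^n_{n+1}$ of $B^n$ and $a_{n+1}$ of $A$. Define the arbitrage index $$I=\frac{a_{n+1}\, b^1_1\, b^2_2\cdots b^n_n}{a_1\, b^1_2\, b^2_3\cdots b^n_{n+1}}.$$ For $\delta\ge 0$ let $U_{\rightarrow}(\delta)$ be the net gain (amount of $A$ received minus $\delta$) from swapping $\delta$ of $A$ sequentially through the pools in the order $A\to B^1\to\cdots\to B^n\to A$, and $U_{\leftarrow}(\delta)$ the net gain from swapping $\delta$ of $A$ through the same pools in the reversed order $A\to B^n\to\cdots\to B^1\to A$. If $I>\dfrac{1}{r_1^{n+1}r_2^{n+1}}$, then there exists $\delta>0$ with $U_{\rightarrow}(\delta)>0$, and $U_{\leftarrow}(\delta)<0$ for every $\delta>0$.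
   Context: Constant-product automated market maker with fees (Uniswap V2 model). A pool between tokens $X$ and $Y$ holds reserves $x>0$ of $X$ and $y>0$ of $Y$. Swapping an input amount $\delta\ge 0$ of $X$ into the pool returns $\mathrm{out}_{x,y}(\delta)=\dfrac{r_1 r_2\, y\,\delta}{x+r_1\delta}$ of $Y$ (and swapping in $Y$ is symmetric with the roles of $x,y$ exchanged), where $r_1,r_2\in(0,1]$ are fixed fee parameters (Uniswap V2: $r_1=0.997$, $r_2=1$). In a sequential (cyclic) trade, the entire output of each swap is the input of the next swap, and each pool is used once with its initial reserves. *)

(* Defs.v *)
From mathcomp Require Import all_boot all_order all_algebra.
Set Implicit Arguments. Unset Strict Implicit. Unset Printing Implicit Defensive.
Import Order.TTheory GRing.Theory Num.Theory.
Local Open Scope ring_scope.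

(* out_{x,y}(d) = r1 r2 y d / (x + r1 d): swap d of the token with reserve x
   into a pool with reserves (x, y); returns an amount of the other token. *)
Definition swap_out {R : realFieldType} (r1 r2 x y d : R) : R :=
  r1 * r2 * y * d / (x + r1 * d).

(* The cycle has n+1 pools, indexed k = 0..n (pool k here = pool k+1 of the
   paper).  In the forward direction A -> B^1 -> ... -> B^n -> A, pool k has
   reserve x k of its input token and y k of its output token:
     x 0 = a_1,           y 0 = b^1_1,
     x k = b^k_{k+1},     y k = b^{k+1}_{k+1}   (1 <= k <= n-1),
     x n = b^n_{n+1},     y n = a_{n+1}. *)

Definition fwd_out {R : realFieldType} (r1 r2 : R) (n : nat) (x y : nat -> R)
  (d : R) : R :=
  foldl (fun d k => swap_out r1 r2 (x k) (y k) d) d (iota 0 n.+1).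

Definition bwd_out {R : realFieldType} (r1 r2 : R) (n : nat) (x y : nat -> R)
  (d : R) : R :=
  foldl (fun d k => swap_out r1 r2 (y k) (x k) d) d (rev (iota 0 n.+1)).

Definition U_fwd {R : realFieldType} (r1 r2 : R) n (x y : nat -> R) (d : R) : R :=
  fwd_out r1 r2 n x y d - d.
Definition U_bwd {R : realFieldType} (r1 r2 : R) n (x y : nat -> R) (d : R) : R :=
  bwd_out r1 r2 n x y d - d.

Definition arb_index {R : realFieldType} n (x y : nat -> R) : R :=
  (\prod_(k < n.+1) y k) / (\prod_(k < n.+1) x k).

(* Main.v *)
Require Import Defs.
From mathcomp Require Import all_boot all_order all_algebra.
From mathcomp Require Import ring lra.
Import Order.TTheory GRing.Theory Num.Theory.
Local Open Scope ring_scope.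

Lemma fold_mob (R : realFieldType) (r1 r2 : R) (p q : nat -> R) (s : seq nat) :
 0 < r1 -> 0 < r2 -> (forall k, k \in s -> 0 < p k /\ 0 < q k) ->
 exists C, 0 <= C /\ forall d, 0 <= d ->
  foldl (fun d k => swap_out r1 r2 (p k) (q k) d) d s =
   (\prod_(k <- s) (r1*r2*q k)) * d / ((\prod_(k <- s) p k) + C * d).
Proof.
move=> h1 h2; elim: s => [|k s IH] hs.
  exists 0; split => // d _; by rewrite !big_nil mul0r addr0 divr1 mul1r.
have [hpk hqk] := hs k (mem_head _ _).
have [C [HC HF]] := IH (fun j hj => hs j ltac:(by rewrite inE hj orbT)).
have hB : 0 < \prod_(j <- s) p j.
  rewrite big_seq; apply: prodr_gt0 => j hj; exact: (proj1 (hs j ltac:(by rewrite inE hj orbT))).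
exists ((\prod_(j <- s) p j) * r1 + C * (r1*r2*q k)); split.
  apply: addr_ge0; apply: mulr_ge0 => //; try apply: mulr_ge0; try apply: mulr_ge0; by apply: ltW.
move=> d hd /=.
have hden : 0 < p k + r1 * d by apply: ltr_wpDr => //; apply: mulr_ge0 => //; apply: ltW.
rewrite HF; last first.
  rewrite /swap_out; apply: divr_ge0; last exact: ltW.
  by repeat apply: mulr_ge0 => //; apply: ltW.
rewrite !big_cons /swap_out.
have he : 0 <= C * (r1 * r2 * q k * d / (p k + r1 * d)).
  apply: mulr_ge0 => //; apply: divr_ge0; last exact: ltW.
  by repeat apply: mulr_ge0 => //; apply: ltW.
field.
apply/andP; split; last by rewrite gt_eqF.
rewrite gt_eqF //; apply: ltr_wpDr; last exact: mulr_gt0.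
apply: mulr_ge0 => //; apply: addr_ge0; apply: mulr_ge0 => //; try apply: mulr_ge0; try apply: mulr_ge0; by apply: ltW.
Qed.
Lemma prod_iota (R : realFieldType) (F : nat -> R) n : \prod_(k <- iota 0 n.+1) F k = \prod_(k < n.+1) F k.
Proof. by rewrite -(big_mkord xpredT) /index_iota subn0. Qed.
Lemma prod_sc (R : realFieldType) (r1 r2 : R) (F : nat -> R) n :
  \prod_(k < n.+1) (r1 * r2 * F k) = r1 ^+ n.+1 * r2 ^+ n.+1 * \prod_(k < n.+1) F k.
Proof. by rewrite !big_split /= !prodr_const card_ord. Qed.

Theorem lemma1 (R : realFieldType) (r1 r2 : R) (n : nat) (x y : nat -> R) :
  0 < r1 -> r1 <= 1 -> 0 < r2 -> r2 <= 1 -> (1 <= n)%N ->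
  (forall k : nat, (k <= n)%N -> 0 < x k) ->
  (forall k : nat, (k <= n)%N -> 0 < y k) ->
  1 / (r1 ^+ n.+1 * r2 ^+ n.+1) < arb_index n x y ->
  (exists d : R, 0 < d /\ 0 < U_fwd r1 r2 n x y d) /\
  (forall d : R, 0 < d -> U_bwd r1 r2 n x y d < 0).
Proof.
move=> h1 h1' h2 h2' _ hx hy hI.
have hmem : forall k, k \in iota 0 n.+1 -> (0 < x k /\ 0 < y k).
  by move=> k; rewrite mem_iota add0n ltnS => /andP [_ hk]; split; [apply: hx|apply: hy].
have hP : 0 < \prod_(k < n.+1) y k by apply: prodr_gt0 => k _; apply: hy; rewrite -ltnS.
have hQ : 0 < \prod_(k < n.+1) x k by apply: prodr_gt0 => k _; apply: hx; rewrite -ltnS.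
have ht : 0 < r1 ^+ n.+1 * r2 ^+ n.+1 by apply: mulr_gt0; apply: exprn_gt0.
have ht1 : r1 ^+ n.+1 * r2 ^+ n.+1 <= 1 by apply: mulr_ile1; [apply: exprn_ge0; exact: ltW|apply: exprn_ge0; exact: ltW|apply: exprn_ile1 => //; exact: ltW|apply: exprn_ile1 => //; exact: ltW].
move: hI; rewrite /arb_index.
set t := r1 ^+ n.+1 * r2 ^+ n.+1.
set P := \prod_(k < n.+1) y k.
set Q := \prod_(k < n.+1) x k.
rewrite ltr_pdivlMr // => hI.
have hI2 : Q < t * P.
  by move: hI; rewrite mul1r ltr_pdivrMl.
split.
- have [C [HC HF]] := @fold_mob R r1 r2 x y _ h1 h2 hmem.
  have hA : \prod_(k <- iota 0 n.+1) (r1 * r2 * y k) = t * P by rewrite prod_iota prod_sc.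
  have hB : \prod_(k <- iota 0 n.+1) x k = Q by rewrite prod_iota.
  rewrite hA hB in HF.
  have hC1 : 0 < C + 1 by lra.
  set d := (t * P - Q) / (C + 1).
  have hd : d * (C + 1) = t * P - Q by rewrite /d; field; rewrite gt_eqF.
  have hd0 : 0 < d by rewrite /d; apply: divr_gt0 => //; lra.
  exists d; split => //.
  rewrite /U_fwd /fwd_out HF; last exact: ltW.
  have hden : 0 < Q + C * d by apply: ltr_wpDr => //; apply: mulr_ge0 => //; apply: ltW.
  rewrite subr_gt0 ltr_pdivlMr //.
  nra.
- move=> d hd0.
  have hmem' : forall k, k \in rev (iota 0 n.+1) -> (0 < y k /\ 0 < x k).
    by move=> k; rewrite mem_rev => /hmem [a b].
  have [C [HC HF]] := @fold_mob R r1 r2 y x _ h1 h2 hmem'.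
  have hA : \prod_(k <- rev (iota 0 n.+1)) (r1 * r2 * x k) = t * Q by rewrite big_rev prod_iota prod_sc.
  have hB : \prod_(k <- rev (iota 0 n.+1)) y k = P by rewrite big_rev prod_iota.
  rewrite hA hB in HF.
  rewrite /U_bwd /bwd_out HF; last exact: ltW.
  have hden : 0 < P + C * d by apply: ltr_wpDr => //; apply: mulr_ge0 => //; apply: ltW.
  rewrite subr_lt0 ltr_pdivrMr //.
  have htP : t * P <= P by rewrite ler_piMl //; exact: ltW.
  have htt : t * (t * P) <= t * P by rewrite ler_piMl //; apply: mulr_ge0; apply: ltW.
  have htQ : t * Q < t * (t * P) by rewrite ltr_pM2l.
  have : t * Q < P by lra.
  nra.
Qed.
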